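(* Let $\mathcal{M},\mathcal{Y},\mathcal{S}'$ be finite sets and $\{g_{s'}\}_{s'\in\mathcal{S}'}$, $g_{s'}:\mathcal{M}\times\mathcal{Y}\to\mathcal{Y}$, a family such that (i) $\Pr_{S'}[g_{S'}(m,y)=g_{S'}(\hat m,\hat y)]\le1/|\mathcal{Y}|$ for all $(m,y)\ne(\hat m,\hat y)$ when $S'$ is uniform on $\mathcal{S}'$, and (ii) for every $m\in\mathcal{M}$, $c\in\mathcal{Y}$, $s'\in\mathcal{S}'$ there is a unique $y\in\mathcal{Y}$ with $g_{s'}(m,y)=c$. Let $M'=(M,Y)$ be uniformly distributed on $\mathcal{M}\times\mathcal{Y}$ and correlated with a quantum system $E'$ via the cq state $\rho_{M'E'}=\sum_{m,y}\frac{1}{|\mathcal{M}||\mathcal{Y}|}|m,y\rangle\langle m,y|\otimes\rho_{E'}^{m,y}$. Let $S'$ be uniform on $\mathcal{S}'$ and independent of $(M',E')$, and $C:=g_{S'}(M,Y)$. Then $$d(M;E'S'C)\le d(M';E').$$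
   Context: For a cq state $\rho_{VF}=\sum_vP_V(v)|v\rangle\langle v|\otimes\rho_F^v$ with $V$ taking values in a finite set $\mathcal{V}$, $d(V;F):=\min_{\sigma_F}\|\rho_{VF}-P_{\mathcal{V}}\otimes\sigma_F\|_1$, where $P_{\mathcal{V}}$ is the uniform distribution on $\mathcal{V}$ (as a diagonal density operator) and the minimum is over states $\sigma_F$. In $d(M;E'S'C)$ the system consists of $E'$ together with classical registers holding $S'$ and $C$. *)

(* Defs.v *)
(* Complex numbers: R[i] (mathcomp-real-closed
   'complex') over an arbitrary realType R; operators on finite-dimensional Hilbert
   spaces are square matrices over R[i]; tensor product is mxtens' Kronecker product
   [*t]; conjugate transpose is spectral.v's  M ^t*. *)
From HB Require Import structures.
From mathcomp Require Import all_boot all_order all_algebra.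
From mathcomp Require Import all_classical all_reals.
From mathcomp Require Import complex mxtens spectral.

Set Implicit Arguments.
Unset Strict Implicit.
Unset Printing Implicit Defensive.

Import Order.TTheory GRing.Theory Num.Theory.
Local Open Scope ring_scope.
Local Open Scope sesquilinear_scope.
Local Open Scope classical_set_scope.

Section QDefs.
Variable R : realType.
Local Notation C := R[i].

Definition psdmx n (A : 'M[C]_n) : Prop :=
  A ^t* = A /\ forall u : 'rV[C]_n, 0 <= (u *m A *m u ^t*) 0 0.

Definition density n (A : 'M[C]_n) : Prop := psdmx A /\ \tr A = 1.

Definition msqrt n (A : 'M[C]_n) : 'M[C]_n :=
  xget 0 [set P | psdmx P /\ P *m P = A].

Definition trnorm n (A : 'M[C]_n) : R := complex.Re (\tr (msqrt (A ^t* *m A))).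

Definition ketbra (T : finType) (t : T) : 'M[C]_#|T| :=
  delta_mx (enum_rank t) (enum_rank t).

Definition unif_op (T : finType) : 'M[C]_#|T| :=
  \sum_(t : T) (#|T|%:R)^-1 *: ketbra t.

(* d(V;F) = min_{sigma_F} || rho_VF - P_V (x) sigma_F ||_1  (taken as an infimum,
   the minimum being attained) *)
Definition dunif (V : finType) n (rhoVF : 'M[C]_(#|V| * n)) : R :=
  inf [set x : R | exists sigma : 'M[C]_n,
                     density sigma /\ x = trnorm (rhoVF - unif_op V *t sigma)].

End QDefs.

Arguments ketbra {R T} t.
Arguments unif_op {R} T.
Arguments dunif {R V n} rhoVF.
Arguments trnorm {R n} A.
Arguments density {R n} A.
Arguments psdmx {R n} A.
Arguments msqrt {R n} A.

(* Main.v *)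
Require Import Defs.
From HB Require Import structures.
From mathcomp Require Import all_boot all_order all_algebra.
From mathcomp Require Import all_classical all_reals.
From mathcomp Require Import complex mxtens spectral.
From mathcomp Require Import ring.
Import Order.TTheory GRing.Theory Num.Theory.
Local Open Scope ring_scope.
Set Implicit Arguments.
Unset Strict Implicit.
Unset Printing Implicit Defensive.

Section Lin.
Local Open Scope sesquilinear_scope.
Variable R : realType.
Local Notation C := R[i].

Lemma adjM m n p (A : 'M[C]_(m, n)) (B : 'M[C]_(n, p)) :
  (A *m B) ^t* = B ^t* *m A ^t*.
Proof. by rewrite trmx_mul map_mxM. Qed.

Lemma adjD m n (A B : 'M[C]_(m, n)) : (A + B) ^t* = A ^t* + B ^t*.
Proof. by apply/matrixP=> i j; rewrite !mxE rmorphD. Qed.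

Lemma adjN m n (A : 'M[C]_(m, n)) : (- A) ^t* = - A ^t*.
Proof. by apply/matrixP=> i j; rewrite !mxE rmorphN. Qed.

Lemma adjB m n (A B : 'M[C]_(m, n)) : (A - B) ^t* = A ^t* - B ^t*.
Proof. by rewrite adjD adjN. Qed.

Lemma adjZ m n c (A : 'M[C]_(m, n)) : (c *: A) ^t* = c^* *: A ^t*.
Proof. by apply/matrixP=> i j; rewrite !mxE rmorphM. Qed.

Lemma adj_sum (I : finType) m n (F : I -> 'M[C]_(m, n)) :
  (\sum_i F i) ^t* = \sum_i (F i) ^t*.
Proof.
apply/matrixP=> i j; rewrite !mxE !summxE rmorph_sum; apply: eq_bigr => k _.
by rewrite !mxE.
Qed.

Lemma form_ge0 n (w : 'rV[C]_n) : 0 <= (w *m w ^t*) 0 0.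
Proof.
rewrite !mxE sumr_ge0 // => k _; rewrite !mxE; exact: mul_conjC_ge0.
Qed.

Lemma diag_form_ge0 n (w : 'rV[C]_n) (s : 'rV[C]_n) :
  (forall k, 0 <= s 0 k) -> 0 <= (w *m diag_mx s *m w ^t*) 0 0.
Proof.
move=> s0; rewrite mul_mx_diag !mxE sumr_ge0 // => k _; rewrite !mxE.
by rewrite mulrAC mulr_ge0 // mul_conjC_ge0.
Qed.

Lemma spec_row n (A : 'M[C]_n) (i : 'I_n) : A \is normalmx ->
  let u := row i (spectralmx A) in
  u *m A = spectral_diag A 0 i *: u /\ (u *m u ^t*) 0 0 = 1.
Proof.
move=> An u; have /orthomx_spectralP Ae := An.
have Uu := spectral_unitarymx A.
have UU := unitarymxP Uu.
move: Ae UU Uu; rewrite /u; set U := spectralmx A; set d := spectral_diag A.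
move=> Ae UU Uu.
split.
  rewrite !rowE -mulmxA [X in _ *m (_ *m X)]Ae invmx_unitary // !mulmxA -[X in X *m diag_mx d]mulmxA UU mulmx1.
  by rewrite -(rowE i (diag_mx d)) row_diag_mx scalemxAl.
have -> : (row i U *m (row i U)^t*) 0 0 = (U *m U^t*) i i.
  by rewrite !mxE; apply: eq_bigr => k _; rewrite !mxE.
by rewrite UU mxE eqxx.
Qed.


Lemma herm_normal n (A : 'M[C]_n) : A ^t* = A -> A \is normalmx.
Proof. by move=> h; apply/normalmxP; rewrite h. Qed.

Lemma form_eig n (A : 'M[C]_n) (u : 'rV[C]_n) d :
  u *m A = d *: u -> (u *m u ^t*) 0 0 = 1 -> (u *m A *m u ^t*) 0 0 = d.
Proof. by move=> uA uu; rewrite uA -scalemxAl mxE uu mulr1. Qed.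

Lemma diag_mx0' n : diag_mx (0 : 'rV[C]_n) = 0.
Proof. by rewrite diag_mx_sum_delta big1 // => k _; rewrite mxE scale0r. Qed.

Lemma mxB00 (X Y : 'M[C]_1) : (X - Y) 0 0 = X 0 0 - Y 0 0.
Proof. by rewrite !mxE. Qed.

Lemma mxD00 (X Y : 'M[C]_1) : (X + Y) 0 0 = X 0 0 + Y 0 0.
Proof. by rewrite !mxE. Qed.

Lemma psd_uniq n (P Q : 'M[C]_n) : psdmx P -> psdmx Q -> P *m P = Q *m Q -> P = Q.
Proof.
case=> Ph Pp [Qh Qp] PQ.
set A := P - Q.
have Ah : A ^t* = A by rewrite /A adjB Ph Qh.
have An := herm_normal Ah.
have /orthomx_spectralP Ae := An.
suff d0 : spectral_diag A = 0.
  by apply/eqP; rewrite -subr_eq0 -/A Ae d0 diag_mx0' mulmx0 mul0mx.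
apply/rowP => i; rewrite [RHS]mxE.
have [uA uu] := spec_row i An.
move: uA uu; set u := row i (spectralmx A); set d := spectral_diag A 0 i.
move=> uA uu.
set p := (u *m P *m u ^t*) 0 0; set q := (u *m Q *m u ^t*) 0 0.
have p0 : 0 <= p := Pp u.
have q0 : 0 <= q := Qp u.
have dpq : d = p - q.
  by rewrite -(form_eig uA uu) /A mulmxBr mulmxBl mxB00.
have dr : d^* = d by rewrite conj_Creal // dpq realB // ger0_real.
have key : (u *m (P *m P - Q *m Q) *m u ^t*) 0 0 = 0.
  by rewrite PQ subrr mulmx0 mul0mx mxE.
have ePQ : P *m P - Q *m Q = P *m A + A *m Q.
  by rewrite /A mulmxBr mulmxBl addrA subrK.
have Au : A *m u ^t* = d^* *: u ^t*.
  by rewrite -[X in X *m _]Ah -adjM uA adjZ.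
have t1 : (u *m (P *m A) *m u ^t*) 0 0 = d^* * p.
  by rewrite !mulmxA -(mulmxA _ A) Au -scalemxAr mxE.
have t2 : (u *m (A *m Q) *m u ^t*) 0 0 = d * q.
  by rewrite !mulmxA uA -!scalemxAl mxE.
move: key; rewrite ePQ mulmxDr mulmxDl mxD00 t1 t2 dr -mulrDr => /eqP.
rewrite mulf_eq0 => /orP[/eqP //|]; rewrite paddr_eq0 // => /andP[/eqP p00 /eqP q00].
by rewrite dpq p00 q00 subrr.
Qed.

Lemma sqrt_ex n (A : 'M[C]_n) : exists P, psdmx P /\ P *m P = A ^t* *m A.
Proof.
set B := A ^t* *m A.
have Bh : B ^t* = B by rewrite /B adjM trmxCK.
have Bn := herm_normal Bh.
have /orthomx_spectralP Be := Bn.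
have d0 : forall k, 0 <= spectral_diag B 0 k.
  move=> k; have [uB uu] := spec_row k Bn.
  rewrite -(form_eig uB uu) /B !mulmxA -(mulmxA _ A) -[X in _ *m (X *m _)]trmxCK -adjM.
  exact: form_ge0.
move: Be d0; set U := spectralmx B; set d := spectral_diag B => Be d0.
have Uu : U \is unitarymx := spectral_unitarymx B.
set s := \row_k sqrtC (d 0 k).
have s0 : forall k, 0 <= s 0 k by move=> k; rewrite mxE sqrtC_ge0.
have Dh : (diag_mx s) ^t* = diag_mx s.
  apply/matrixP => i j; rewrite !mxE eq_sym; case: (i =P j) => [->|_].
    by rewrite !mulr1n conj_Creal // sqrtC_real.
  by rewrite !mulr0n rmorph0.
exists (U ^t* *m diag_mx s *m U); split; [split|].
- by rewrite !adjM trmxCK Dh mulmxA.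
- move=> u; rewrite !mulmxA -(mulmxA _ U) -[X in _ *m (X *m _)]trmxCK -adjM.
  exact: diag_form_ge0.
have DD : diag_mx s *m diag_mx s = diag_mx d.
  rewrite (mulmx_diag s s); congr diag_mx; apply/rowP => k; rewrite !mxE -expr2 sqrtCK.
  by [].
rewrite Be (invmx_unitary Uu) !mulmxA (mulmxtVK _ Uu) -(mulmxA (U ^t*) (diag_mx s)) DD.
reflexivity.
Qed.


Lemma msqrtP n (A : 'M[C]_n) :
  psdmx (msqrt (A ^t* *m A)) /\ msqrt (A ^t* *m A) *m msqrt (A ^t* *m A) = A ^t* *m A.
Proof.
rewrite /msqrt.
have := @xgetPex _ 0 [set P : 'M[C]_n | psdmx P /\ P *m P = A ^t* *m A]%classic (sqrt_ex A).
done.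
Qed.

Lemma trnormE n (A P : 'M[C]_n) : psdmx P -> P *m P = A ^t* *m A ->
  trnorm A = complex.Re (\tr P).
Proof.
move=> Pp PP; have [Mp MM] := msqrtP A.
by rewrite /trnorm (psd_uniq Mp Pp) // MM PP.
Qed.

Lemma psd_diag_ge0 n (P : 'M[C]_n) i : psdmx P -> 0 <= P i i.
Proof.
case=> _ Pp; have := Pp (delta_mx 0 i).
have -> : (delta_mx 0 i : 'rV[C]_n) ^t* = delta_mx i 0.
  by apply/matrixP => a b; rewrite !mxE rmorph_nat andbC.
by rewrite -rowE -colE !mxE.
Qed.

Lemma trnorm_ge0 n (A : 'M[C]_n) : 0 <= trnorm A.
Proof.
have [Pp _] := msqrtP A.
have : 0 <= \tr (msqrt (A ^t* *m A)).
  by rewrite /mxtrace sumr_ge0 // => i _; apply: psd_diag_ge0.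
by rewrite lecE => /andP[_].
Qed.

Lemma psd_conj m n (Y : 'M[C]_n) (W : 'M[C]_(m, n)) :
  psdmx Y -> psdmx (W *m Y *m W ^t*).
Proof.
case=> Yh Yp; split; first by rewrite !adjM trmxCK Yh mulmxA.
move=> u; rewrite !mulmxA -(mulmxA _ (W ^t*)) -adjM.
exact: (Yp (u *m W)).
Qed.

Lemma psd_scale n (Y : 'M[C]_n) c : 0 <= c -> psdmx Y -> psdmx (c *: Y).
Proof.
move=> c0 [Yh Yp]; split; first by rewrite adjZ Yh conj_Creal // ger0_real.
move=> u; rewrite -scalemxAr -scalemxAl mxE mulr_ge0 //.
Qed.

Lemma psd_sum (I : finType) n (F : I -> 'M[C]_n) :
  (forall i, psdmx (F i)) -> psdmx (\sum_i F i).
Proof.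
move=> Fp; split.
  by rewrite adj_sum; apply: eq_bigr => i _; case: (Fp i).
move=> u; rewrite mulmx_sumr mulmx_suml summxE sumr_ge0 // => i _.
by case: (Fp i) => _; apply.
Qed.

Lemma mxtraceZ' n c (A : 'M[C]_n) : \tr (c *: A) = c * \tr A.
Proof. by rewrite /mxtrace mulr_sumr; apply: eq_bigr => i _; rewrite mxE. Qed.

Lemma mxtrace_sum' (I : finType) n (F : I -> 'M[C]_n) :
  \tr (\sum_i F i) = \sum_i \tr (F i).
Proof.
rewrite /mxtrace; under eq_bigr do rewrite summxE.
exact: exchange_big.
Qed.

Definition injmx n n' (f : 'I_n -> 'I_n') : 'M[C]_(n', n) :=
  \matrix_(i, j) ((i == f j)%:R).

Lemma injmx_mul n n' (f g : 'I_n -> 'I_n') :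
  (injmx f) ^t* *m injmx g = \matrix_(j, j') ((f j == g j')%:R).
Proof.
apply/matrixP => j j'; rewrite !mxE (bigD1 (f j)) //= big1 => [|i ni].
  by rewrite !mxE eqxx rmorph_nat mul1r addr0.
by rewrite !mxE (negbTE ni) rmorph_nat mul0r.
Qed.

Section Phi.
Variables (S : finType) (n n' : nat) (V : S -> 'M[C]_(n', n)).
Hypothesis VV : forall s t, (V s) ^t* *m V t = if s == t then 1%:M else 0.

Local Notation k := (#|S|%:R : C).

Definition Phi (Y : 'M[C]_n) : 'M[C]_n' :=
  \sum_s (k^-1 *: (V s *m Y *m (V s) ^t*)).

Lemma VconjM s (A B : 'M[C]_n) :
  (V s *m A *m (V s) ^t*) *m (V s *m B *m (V s) ^t*) = V s *m (A *m B) *m (V s) ^t*.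
Proof. by rewrite !mulmxA -(mulmxA _ ((V s) ^t*) (V s)) VV eqxx mulmx1. Qed.

Lemma Phi_mul (Y Z : 'M[C]_n) : Phi Y *m Phi Z = k^-1 *: Phi (Y *m Z).
Proof.
rewrite /Phi mulmx_suml scaler_sumr; apply: eq_bigr => s _.
rewrite mulmx_sumr (bigD1 s) //= big1 ?addr0 => [|t ts].
  by rewrite -scalemxAl -scalemxAr !scalerA VconjM.
rewrite -scalemxAl -scalemxAr !mulmxA -(mulmxA _ ((V s) ^t*) (V t)) VV.
by rewrite eq_sym (negbTE ts) mulmx0 !mul0mx !scaler0.
Qed.

Lemma kinv_conj : (k^-1)^* = k^-1.
Proof. by rewrite conj_Creal // realV realn. Qed.

Lemma Phi_adj (Y : 'M[C]_n) : (Phi Y) ^t* = Phi (Y ^t*).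
Proof.
rewrite /Phi adj_sum; apply: eq_bigr => s _.
by rewrite adjZ kinv_conj !adjM trmxCK mulmxA.
Qed.

Lemma Phi_psd (Y : 'M[C]_n) : psdmx Y -> psdmx (Phi Y).
Proof.
move=> Yp; rewrite /Phi; apply: psd_sum => s.
apply: psd_scale; first by rewrite invr_ge0 ler0n.
exact: psd_conj.
Qed.

Lemma Phi_tr (Y : 'M[C]_n) : (0 < #|S|)%N -> \tr (Phi Y) = \tr Y.
Proof.
move=> S0; rewrite /Phi mxtrace_sum'.
under eq_bigr => s _ do rewrite mxtraceZ' mxtrace_mulC mulmxA VV eqxx mul1mx.
rewrite sumr_const -[X in _ *+ X]/#|S|.
rewrite -(mulr_natl (#|S|%:R^-1 * \tr Y)) mulrA mulfV ?mul1r //.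
by rewrite pnatr_eq0 -lt0n.
Qed.

Lemma trnorm_Phi (X : 'M[C]_n) : (0 < #|S|)%N -> trnorm (Phi X) = trnorm X.
Proof.
move=> S0; have [Pp PP] := msqrtP X.
rewrite (trnormE Pp PP) (trnormE (P := Phi (msqrt (X ^t* *m X)))) ?Phi_tr //.
  exact: Phi_psd.
by rewrite Phi_adj !Phi_mul PP.
Qed.

End Phi.

Lemma injVV (S : finType) n n' (f : S -> 'I_n -> 'I_n')
  (finj : forall s t j j', (f s j == f t j') = (s == t) && (j == j')) s t :
  (injmx (f s)) ^t* *m injmx (f t) = if s == t then 1%:M else 0.
Proof.
rewrite injmx_mul; apply/matrixP => j j'; rewrite !mxE finj.
by case: (s == t); rewrite ?mxE.
Qed.


End Lin.
Arguments injmx {R n n'} f.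
Arguments Phi {R S n n'} V Y.



Section Idx.
Local Open Scope sesquilinear_scope.
Variable R : realType.
Local Notation C := R[i].

Lemma index_eq m n (x y : 'I_m * 'I_n) :
  (mxtens_index x == mxtens_index y) = (x == y).
Proof. exact: (inj_eq (can_inj (@mxtens_indexK m n))). Qed.

Lemma sum_delta_l (T : finType) (a : T) (F : T -> C) :
  \sum_j ((a == j)%:R * F j) = F a.
Proof.
rewrite (bigD1 a) //= eqxx mul1r big1 ?addr0 // => j /negbTE.
by rewrite eq_sym => ->; rewrite mul0r.
Qed.

Lemma sum_delta_r (T : finType) (a : T) (F : T -> C) :
  \sum_j (F j * (a == j)%:R) = F a.
Proof. by under eq_bigr do rewrite mulrC; apply: sum_delta_l. Qed.

Lemma conj_injE n n' (f : 'I_n -> 'I_n') (Y : 'M[C]_n) i i' :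
  (injmx f *m Y *m (injmx f) ^t*) i i' =
  \sum_j' \sum_j ((i == f j)%:R * Y j j' * (i' == f j')%:R).
Proof.
rewrite !mxE; apply: eq_bigr => j' _; rewrite !mxE mulr_suml.
by apply: eq_bigr => j _; rewrite !mxE rmorph_nat.
Qed.

Lemma conj_inj_char n n' (f : 'I_n -> 'I_n') (Y : 'M[C]_n) (T : 'M[C]_n') :
  injective f ->
  (forall j j', T (f j) (f j') = Y j j') ->
  (forall i i', (forall j, f j != i) -> T i i' = 0) ->
  (forall i i', (forall j, f j != i') -> T i i' = 0) ->
  injmx f *m Y *m (injmx f) ^t* = T.
Proof.
move=> finj HT H1 H2; apply/matrixP => i i'; rewrite conj_injE.
case: (pickP (fun j => f j == i)) => [j0 /eqP <- | ni]; last first.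
  have ni2 : forall j, f j != i by move=> j; rewrite ni.
  rewrite H1 //; apply: big1 => j' _; apply: big1 => j _.
  by rewrite eq_sym (negbTE (ni2 j)) !mul0r.
case: (pickP (fun j => f j == i')) => [j0' /eqP <- | ni]; last first.
  have ni2 : forall j, f j != i' by move=> j; rewrite ni.
  rewrite H2 //; apply: big1 => j' _; apply: big1 => j _.
  by rewrite (eq_sym i') (negbTE (ni2 j')) !mulr0.
under eq_bigr => j' _ do under eq_bigr => j _ do rewrite (inj_eq finj) -mulrA.
under eq_bigr => j' _ do rewrite sum_delta_l.
by rewrite (eq_bigr (fun j' => Y j0 j' * (j0' == j')%:R)) ?sum_delta_r ?HT // => j' _; rewrite (inj_eq finj).
Qed.

End Idx.



Section Main.
Local Open Scope sesquilinear_scope.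
Variable R : realType.
Local Notation C := R[i].
Variables (M Y S : finType) (dE : nat) (g : S -> M -> Y -> Y).
Hypothesis ginj : forall s m, injective (g s m).

Lemma natr_andb (a b : bool) : ((a && b)%:R : C) = a%:R * b%:R.
Proof. by case: a; case: b; rewrite /= ?mulr1 ?mul0r ?mulr0. Qed.

Definition phi s (j : 'I_(#|{: M * Y}| * dE)) : 'I_(#|M| * ((dE * #|S|) * #|Y|)) :=
  let x : M * Y := enum_val (mxtens_unindex j).1 in
  mxtens_index (enum_rank x.1, mxtens_index (mxtens_index ((mxtens_unindex j).2,
    enum_rank s), enum_rank (g s x.1 x.2))).

Lemma phiE s (x : M * Y) e :
  phi s (mxtens_index (enum_rank x, e)) =
  mxtens_index (enum_rank x.1, mxtens_index (mxtens_index (e, enum_rank s),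
    enum_rank (g s x.1 x.2))).
Proof. by rewrite /phi mxtens_indexK /= enum_rankK. Qed.

Lemma idx_cases (j : 'I_(#|{: M * Y}| * dE)) :
  exists x e, j = mxtens_index (enum_rank x, e).
Proof. by case: (mxtens_indexP j) => a e; exists (enum_val a), e; rewrite enum_valK. Qed.

Lemma rk_eq (T : finType) (a b : T) : (enum_rank a == enum_rank b) = (a == b).
Proof. exact: (inj_eq enum_rank_inj). Qed.

Lemma keyeq s (x my : M * Y) :
  (x.1 == my.1) && (g s x.1 x.2 == g s my.1 my.2) = (x == my).
Proof.
case: x my => m y [m' y']; rewrite xpair_eqE /=.
by case: (m =P m') => [<-|] //=; rewrite (inj_eq (@ginj s m)).
Qed.

Lemma index_inj m n (x y : 'I_m * 'I_n) : mxtens_index x = mxtens_index y -> x = y.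
Proof. exact: (can_inj (@mxtens_indexK m n)). Qed.

Lemma phi_inj s t j j' : (phi s j == phi t j') = (s == t) && (j == j').
Proof.
apply/eqP/andP => [|[/eqP <- /eqP <-] //].
have [[m y] [e ->]] := idx_cases j; have [[m' y'] [e' ->]] := idx_cases j'.
rewrite !phiE /= => /index_inj E.
have /enum_rank_inj Em := congr1 fst E; have /index_inj E2 := congr1 snd E.
have /enum_rank_inj Eg := congr1 snd E2; have /index_inj E3 := congr1 fst E2.
have Ee := congr1 fst E3; have /enum_rank_inj Es := congr1 snd E3.
simpl in Em, Eg, Ee, Es; subst m' e' t.
by rewrite (@ginj s m _ _ Eg).
Qed.

Definition psi (sc : S * Y) (e : 'I_dE) : 'I_((dE * #|S|) * #|Y|) :=
  mxtens_index (mxtens_index (e, enum_rank sc.1), enum_rank sc.2).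

Lemma psi_inj a b e e' : (psi a e == psi b e') = (a == b) && (e == e').
Proof.
apply/eqP/andP => [|[/eqP <- /eqP <-] //].
case: a b => s c [t c'].
rewrite /psi /= => /index_inj E.
have /enum_rank_inj Ec := congr1 snd E; have /index_inj E2 := congr1 fst E.
have Ee := congr1 fst E2; have /enum_rank_inj Es := congr1 snd E2.
simpl in Ec, Ee, Es; by subst.
Qed.

Lemma KI2 (A : 'M[C]_dE) s c :
  injmx (psi (s, c)) *m A *m (injmx (psi (s, c))) ^t* =
  (A *t ketbra s) *t ketbra c.
Proof.
apply: conj_inj_char.
- by move=> e e' /eqP; rewrite psi_inj eqxx /= => /eqP.
- by move=> e e'; rewrite /psi !tensmxE /ketbra !mxE !eqxx /= !mulr1.
- move=> i i'.
  case: (mxtens_indexP i) => i1 c0; case: (mxtens_indexP i1) => e0 b0.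
  case: (mxtens_indexP i') => i1' c0'; case: (mxtens_indexP i1') => e0' b0' ni.
  rewrite !tensmxE /ketbra !mxE !natr_andb.
  have : ~~ ((b0 == enum_rank s) && (c0 == enum_rank c)).
    by apply/negP => /andP[/eqP Eb /eqP Ec]; have := ni e0; rewrite /psi Eb Ec eqxx.
  by case: (b0 == _); case: (c0 == _) => //= _; ring.
- move=> i i'.
  case: (mxtens_indexP i) => i1 c0; case: (mxtens_indexP i1) => e0 b0.
  case: (mxtens_indexP i') => i1' c0'; case: (mxtens_indexP i1') => e0' b0' ni.
  rewrite !tensmxE /ketbra !mxE !natr_andb.
  have : ~~ ((b0' == enum_rank s) && (c0' == enum_rank c)).
    by apply/negP => /andP[/eqP Eb /eqP Ec]; have := ni e0'; rewrite /psi Eb Ec eqxx.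
  by case: (b0' == _); case: (c0' == _) => //= _; ring.
Qed.

Lemma KI s (my : M * Y) (A : 'M[C]_dE) :
  injmx (phi s) *m (ketbra my *t A) *m (injmx (phi s)) ^t* =
  ketbra my.1 *t ((A *t ketbra s) *t ketbra (g s my.1 my.2)).
Proof.
apply: conj_inj_char.
- by move=> j j' /eqP; rewrite phi_inj eqxx /= => /eqP.
- move=> j j'; have [x [e ->]] := idx_cases j; have [x' [e' ->]] := idx_cases j'.
  rewrite !phiE !tensmxE /ketbra !mxE !rk_eq !eqxx -(keyeq s x my) -(keyeq s x' my).
  rewrite !natr_andb /=; ring.
- move=> i i'.
  case: (mxtens_indexP i) => a0 i2; case: (mxtens_indexP i2) => i1 c0.
  case: (mxtens_indexP i1) => e0 b0.
  case: (mxtens_indexP i') => a0' i2'; case: (mxtens_indexP i2') => i1' c0'.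
  case: (mxtens_indexP i1') => e0' b0' ni.
  rewrite !tensmxE /ketbra !mxE !natr_andb.
  have : ~~ [&& a0 == enum_rank my.1, b0 == enum_rank s & c0 == enum_rank (g s my.1 my.2)].
    apply/negP => /and3P[/eqP Ea /eqP Eb /eqP Ec].
    by have := ni (mxtens_index (enum_rank my, e0)); rewrite phiE Ea Eb Ec eqxx.
  by case: (a0 == _); case: (b0 == _); case: (c0 == _) => //= _; ring.
- move=> i i'.
  case: (mxtens_indexP i) => a0 i2; case: (mxtens_indexP i2) => i1 c0.
  case: (mxtens_indexP i1) => e0 b0.
  case: (mxtens_indexP i') => a0' i2'; case: (mxtens_indexP i2') => i1' c0'.
  case: (mxtens_indexP i1') => e0' b0' ni.
  rewrite !tensmxE /ketbra !mxE !natr_andb.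
  have : ~~ [&& a0' == enum_rank my.1, b0' == enum_rank s & c0' == enum_rank (g s my.1 my.2)].
    apply/negP => /and3P[/eqP Ea /eqP Eb /eqP Ec].
    by have := ni (mxtens_index (enum_rank my, e0')); rewrite phiE Ea Eb Ec eqxx.
  by case: (a0' == _); case: (b0' == _); case: (c0' == _) => //= _; ring.
Qed.

End Main.



Section Lin2.
Local Open Scope sesquilinear_scope.
Variable R : realType.
Local Notation C := R[i].

Lemma tens_suml (I : finType) m n p q (F : I -> 'M[C]_(m, n)) (B : 'M[C]_(p, q)) :
  (\sum_i F i) *t B = \sum_i (F i *t B).
Proof.
apply/matrixP => a b; rewrite !mxE !summxE mulr_suml.
by apply: eq_bigr => i _; rewrite !mxE.
Qed.

Lemma tens_sumr (I : finType) m n p q (A : 'M[C]_(m, n)) (F : I -> 'M[C]_(p, q)) :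
  A *t (\sum_i F i) = \sum_i (A *t F i).
Proof.
apply/matrixP => a b; rewrite !mxE !summxE mulr_sumr.
by apply: eq_bigr => i _; rewrite !mxE.
Qed.

Lemma tensZl m n p q c (A : 'M[C]_(m, n)) (B : 'M[C]_(p, q)) :
  (c *: A) *t B = c *: (A *t B).
Proof. by apply/matrixP => a b; rewrite !mxE mulrA. Qed.

Lemma tensZr m n p q c (A : 'M[C]_(m, n)) (B : 'M[C]_(p, q)) :
  A *t (c *: B) = c *: (A *t B).
Proof. by apply/matrixP => a b; rewrite !mxE mulrCA. Qed.

Section PhiLin.
Variables (S : finType) (n n' : nat) (V : S -> 'M[C]_(n', n)).

Lemma Phi_B (A B : 'M[C]_n) : Phi V (A - B) = Phi V A - Phi V B.
Proof.
rewrite /Phi -sumrB; apply: eq_bigr => s _.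
by rewrite mulmxBr mulmxBl scalerBr.
Qed.

Lemma Phi_sum (I : finType) (F : I -> 'M[C]_n) :
  Phi V (\sum_i F i) = \sum_i Phi V (F i).
Proof.
rewrite /Phi exchange_big; apply: eq_bigr => s _.
by rewrite mulmx_sumr mulmx_suml scaler_sumr.
Qed.

Lemma Phi_Z c (A : 'M[C]_n) : Phi V (c *: A) = c *: Phi V A.
Proof.
rewrite /Phi scaler_sumr; apply: eq_bigr => s _.
by rewrite -scalemxAr -scalemxAl !scalerA mulrC.
Qed.

End PhiLin.
End Lin2.

Section Main2.
Local Open Scope sesquilinear_scope.
Variable R : realType.
Local Notation C := R[i].
Variables (M Y S : finType) (dE : nat) (g : S -> M -> Y -> Y).
Hypothesis ginj : forall s m, injective (g s m).

Local Notation Vs := (fun s => injmx (@phi M Y S dE g s)).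
Local Notation Ws := (fun sc : S * Y => injmx (@psi Y S dE sc)).

Lemma E1 (rho : M -> Y -> 'M[C]_dE) c :
  Phi Vs (\sum_(my : M * Y) c *: (ketbra my *t rho my.1 my.2)) =
  \sum_(m : M) \sum_(y : Y) \sum_(s : S)
    (c * #|S|%:R^-1) *: (ketbra m *t ((rho m y *t ketbra s) *t ketbra (g s m y))).
Proof.
rewrite Phi_sum [RHS]pair_big /=; apply: eq_bigr => my _.
rewrite Phi_Z /Phi scaler_sumr; apply: eq_bigr => s _.
by rewrite (KI ginj) scalerA.
Qed.

Lemma E2 (sigma : 'M[C]_dE) :
  Phi Vs (unif_op (M * Y)%type *t sigma) = unif_op M *t Phi Ws sigma.
Proof.
rewrite /unif_op tens_suml.
under eq_bigr => my _ do rewrite tensZl.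
rewrite (E1 (fun _ _ => sigma)) /=.
set K := (#|{: M * Y}|%:R^-1 * #|S|%:R^-1 : C).
transitivity (\sum_(m : M) \sum_(s : S) \sum_(c : Y)
    K *: (ketbra m *t ((sigma *t ketbra s) *t ketbra c))).
  apply: eq_bigr => m _; rewrite exchange_big; apply: eq_bigr => s _.
  by symmetry; apply: (reindex_inj (@ginj s m)).
rewrite /Phi tens_suml; apply: eq_bigr => m _.
rewrite tensZl tens_sumr scaler_sumr [LHS]pair_big /=; apply: eq_bigr => [[s c]] _ /=.
rewrite tensZr KI2 scalerA; congr (_ *: _).
rewrite /K !card_prod !natrM !invfM; ring.
Qed.

End Main2.


Unset Implicit Arguments.
Set Strict Implicit.

Theorem lemma3 (R : realType) (Mset Yset Sset : finType) (dE : nat)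
    (g : Sset -> Mset -> Yset -> Yset)
    (rhoE : Mset -> Yset -> 'M[R[i]]_dE) :
  (0 < #|Mset|)%N -> (0 < #|Yset|)%N -> (0 < #|Sset|)%N ->
  (* (i) collision probability over uniform S' is at most 1/|Y| *)
  (forall (m : Mset) (y : Yset) (m' : Mset) (y' : Yset), (m, y) != (m', y') ->
      (#|[set s : Sset | g s m y == g s m' y']|%:R / #|Sset|%:R : R)
        <= (#|Yset|%:R)^-1) ->
  (* (ii) for all m, c, s' there is a unique y with g_{s'}(m,y) = c *)
  (forall (m : Mset) (c : Yset) (s : Sset), exists! y : Yset, g s m y = c) ->
  (* the conditional states rho_{E'}^{m,y} are density operators *)
  (forall (m : Mset) (y : Yset), density (rhoE m y)) ->
  let rhoMpE : 'M[R[i]]_(#|{: Mset * Yset}| * dE) :=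
    \sum_(my : Mset * Yset)
       (#|Mset|%:R * #|Yset|%:R)^-1 *: (ketbra my *t rhoE my.1 my.2) in
  let rhoMESC : 'M[R[i]]_(#|Mset| * ((dE * #|Sset|) * #|Yset|)) :=
    \sum_(m : Mset) \sum_(y : Yset) \sum_(s : Sset)
       (#|Mset|%:R * #|Yset|%:R * #|Sset|%:R)^-1 *:
         (ketbra m *t ((rhoE m y *t ketbra s) *t ketbra (g s m y))) in
  dunif rhoMESC <= dunif rhoMpE.
Proof.
move=> M0 Y0 S0 _ Huniq Hdens.
pose rhoMpE : 'M[R[i]]_(#|{: Mset * Yset}| * dE) :=
    \sum_(my : Mset * Yset)
       (#|Mset|%:R * #|Yset|%:R)^-1 *: (ketbra my *t rhoE my.1 my.2).
pose rhoMESC : 'M[R[i]]_(#|Mset| * ((dE * #|Sset|) * #|Yset|)) :=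
    \sum_(m : Mset) \sum_(y : Yset) \sum_(s : Sset)
       (#|Mset|%:R * #|Yset|%:R * #|Sset|%:R)^-1 *:
         (ketbra m *t ((rhoE m y *t ketbra s) *t ketbra (g s m y))).
change (dunif rhoMESC <= dunif rhoMpE).
have ginj : forall s m, injective (g s m).
  move=> s m y y' E; have [y0 [_ U]] := Huniq m (g s m y) s.
  by rewrite -(U y erefl) -(U y' (esym E)).
have VVs := injVV R (@phi_inj Mset Yset Sset dE g ginj).
have WWs := injVV R (@psi_inj Yset Sset dE).
have SY0 : (0 < #|{: Sset * Yset}|)%N by rewrite card_prod muln_gt0 S0 Y0.
rewrite /dunif.
set S1 := (X in inf X <= _); set S2 := (X in _ <= inf X).
have lb1 : has_lbound S1.
  by exists 0 => y [sig [_ ->]]; apply: trnorm_ge0.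
apply: lb_le_inf.
  case/card_gt0P: M0 => m0 _; case/card_gt0P: Y0 => y0 _.
  by exists (trnorm (rhoMpE - unif_op _ *t rhoE m0 y0)), (rhoE m0 y0).
move=> y [sig [[sigp sigt] ->]].
apply: (ge_inf lb1).
exists (Phi (fun sc : Sset * Yset => injmx (@psi Yset Sset dE sc)) sig); split.
  split; first exact: Phi_psd.
  by rewrite Phi_tr.
have -> : rhoMESC - unif_op Mset *t Phi (fun sc : Sset * Yset => injmx (@psi Yset Sset dE sc)) sig
  = Phi (fun s => injmx (@phi Mset Yset Sset dE g s)) (rhoMpE - unif_op _ *t sig).
  rewrite Phi_B (E2 ginj) /rhoMpE (E1 ginj); congr (_ - _).
  by apply: eq_bigr => m _; apply: eq_bigr => y' _; apply: eq_bigr => s _; rewrite invfM.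
by rewrite trnorm_Phi.
Qed.
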